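(* Let $Y$, $\nu$, $\nu'$, $d(\cdot,x,n)$ be as in the context, and put $b_k=\log A_k$. Then: 1) For $\nu'$-almost every $x\in Y$, $$\liminf_{n\to\infty}d(\nu,x,n)=\liminf_{n\to\infty}\frac{\sum_{k=1}^n x_k}{\sum_{k=1}^n b_k},\qquad \limsup_{n\to\infty}d(\nu,x,n)=\limsup_{n\to\infty}\frac{\sum_{k=1}^n x_k}{\sum_{k=1}^n b_k},$$ where $x_k=-p_k'\log p_k-(1-p_k')\log(1-p_k)$. 2) For $\nu'$-almost every $x\in\operatorname{supp}(\nu')\subset Y$, $$\liminf_{n\to\infty}d(\nu',x,n)=\liminf_{n\to\infty}\frac{\sum_{k=1}^n y_k}{\sum_{k=1}^n b_k},\qquad \limsup_{n\to\infty}d(\nu',x,n)=\limsup_{n\to\infty}\frac{\sum_{k=1}^n y_k}{\sum_{k=1}^n b_k},$$ where $y_k=-p_k'\log p_k'-(1-p_k')\log(1-p_k')$ (with $0\log0=0$).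
   Context: Let $\mathcal A=\{0,1\}$. Let $(A_n)_{n\ge1}$ be real numbers with $A_n\ge2$. Define closed intervals $I_w$, $w\in\mathcal A^n$: $I_\emptyset=[0,1]$, and for $w\in\mathcal A^{n-1}$ with $I_w=[x_w,x_w+\ell]$, $I_{w0}=[x_w,x_w+\ell/A_n]$, $I_{w1}=[x_w+\ell-\ell/A_n,x_w+\ell]$. Let $Y=\bigcap_n\bigcup_{w\in\mathcal A^n}I_w$. Fix $0<a\le b<1$ and $(p_n)_{n\ge1}$ with $a\le p_n\le b$; let $\nu$ be the Borel probability measure with $\nu(I_\emptyset)=1$, $\nu(I_{w0})=p_n\nu(I_w)$, $\nu(I_{w1})=(1-p_n)\nu(I_w)$ for $w\in\mathcal A^{n-1}$ (so $\operatorname{supp}\nu=Y$). Given another sequence $(p_n')_{n\ge1}$ with $0\le p_n'\le1$, let $\nu'$ be the measure constructed in the same way with $p_n'$ in place of $p_n$. For $x\in Y$ and $n\ge1$, $I_n(x)$ denotes a level-$n$ interval $I_w$, $w\in\mathcal A^n$, containing $x$ (chosen consistently along the coding of $x$), and for a measure $\eta$, $d(\eta,x,n)=\frac{\log\eta(I_n(x))}{\log|I_n(x)|}$. *)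

(* Defs.v *)
From Stdlib Require Import Reals Lra.
Open Scope R_scope.

(* Codings: omega : nat -> bool, digit k (k >= 1) is omega k; true = symbol 1,
   false = symbol 0.  omega 0 is unused.  Sequences A, p, p' are indexed
   from 1 as in the paper (value at 0 unused). *)

Fixpoint ilen (A : nat -> R) (n : nat) : R :=
  match n with
  | O => 1
  | S m => ilen A m / A (S m)
  end.

(* Left endpoint x_w of I_w, w = omega 1 ... omega n. *)
Fixpoint ileft (A : nat -> R) (w : nat -> bool) (n : nat) : R :=
  match n with
  | O => 0
  | S m => ileft A w m + (if w (S m) then ilen A m - ilen A m / A (S m) else 0)
  end.

Definition iright (A : nat -> R) (w : nat -> bool) (n : nat) : R :=
  ileft A w n + ilen A n.

Definition diam (A : nat -> R) (w : nat -> bool) (n : nat) : R :=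
  iright A w n - ileft A w n.

(* eta(I_w) for the measure built from q: eta(I_{w0}) = q_n eta(I_w),
   eta(I_{w1}) = (1-q_n) eta(I_w). *)
Fixpoint cylmass (q : nat -> R) (w : nat -> bool) (n : nat) : R :=
  match n with
  | O => 1
  | S m => cylmass q w m * (if w (S m) then 1 - q (S m) else q (S m))
  end.

Definition dloc (q A : nat -> R) (w : nat -> bool) (n : nat) : R :=
  ln (cylmass q w n) / ln (diam A w n).

Definition in_cyl (w : nat -> bool) (n : nat) (om : nat -> bool) : Prop :=
  forall k, (1 <= k <= n)%nat -> om k = w k.

Definition null_set (q : nat -> R) (N : (nat -> bool) -> Prop) : Prop :=
  forall eps, 0 < eps ->
    exists (ws : nat -> (nat -> bool)) (ns : nat -> nat),
      (forall om, N om -> exists j, in_cyl (ws j) (ns j) om) /\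
      (forall J, sum_f_R0 (fun j => cylmass q (ws j) (ns j)) J < eps).

Definition ae (q : nat -> R) (P : (nat -> bool) -> Prop) : Prop :=
  null_set q (fun om => ~ P om).

Fixpoint psum (f : nat -> R) (n : nat) : R :=
  match n with
  | O => 0
  | S m => psum f m + f (S m)
  end.

Definition is_liminf (u : nat -> R) (l : R) : Prop :=
  forall eps, 0 < eps ->
    (exists N, forall n, (N <= n)%nat -> l - eps < u n) /\
    (forall N, exists n, (N <= n)%nat /\ u n < l + eps).

Definition is_limsup (u : nat -> R) (l : R) : Prop :=
  forall eps, 0 < eps ->
    (exists N, forall n, (N <= n)%nat -> u n < l + eps) /\
    (forall N, exists n, (N <= n)%nat /\ l - eps < u n).

Definition same_liminf (u v : nat -> R) : Prop :=
  exists l, is_liminf u l /\ is_liminf v l.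
Definition same_limsup (u v : nat -> R) : Prop :=
  exists l, is_limsup u l /\ is_limsup v l.

Definition xlnx (t : R) : R := if Req_EM_T t 0 then 0 else t * ln t.

Definition xseq (p p' : nat -> R) (k : nat) : R :=
  - p' k * ln (p k) - (1 - p' k) * ln (1 - p k).
Definition yseq (p' : nat -> R) (k : nat) : R :=
  - xlnx (p' k) - xlnx (1 - p' k).
Definition bseq (A : nat -> R) (k : nat) : R := ln (A k).

Definition ratio (f : nat -> R) (A : nat -> R) (n : nat) : R :=
  psum f n / psum (bseq A) n.

(* Main.v *)
Require Import Defs.
From Stdlib Require Import Reals Lra Lia List Classical.
From Coquelicot Require Coquelicot.
Open Scope R_scope.

Module LimAux.
Import Coquelicot.Coquelicot.

Lemma liminf_ex (u : nat -> R) c d : (forall n, c <= u n <= d) -> exists l, is_liminf u l.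
Proof.
  intros hb. destruct (ex_LimInf_seq u) as [[l| |] hl]; simpl in hl.
  - exists l. intros eps he. destruct (hl (mkposreal eps he)) as [h1 h2]; simpl in *.
    split; auto.
  - destruct (hl d) as [N hN]. specialize (hN N (le_n _)). specialize (hb N). lra.
  - destruct (hl c O) as [n [_ hn]]. specialize (hb n). lra.
Qed.

Lemma limsup_ex (u : nat -> R) c d : (forall n, c <= u n <= d) -> exists l, is_limsup u l.
Proof.
  intros hb. destruct (ex_LimSup_seq u) as [[l| |] hl]; simpl in hl.
  - exists l. intros eps he. destruct (hl (mkposreal eps he)) as [h1 h2]; simpl in *.
    split; auto.
  - destruct (hl d O) as [n [_ hn]]. specialize (hb n). lra.
  - destruct (hl c) as [N hN]. specialize (hN N (le_n _)). specialize (hb N). lra.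
Qed.

Definition tends0 (u : nat -> R) := forall eps, 0 < eps -> exists N, forall n, (N <= n)%nat -> Rabs (u n) < eps.

Lemma same_of_close (u v : nat -> R) c d : (forall n, c <= v n <= d) ->
  tends0 (fun n => u n - v n) -> same_liminf u v /\ same_limsup u v.
Proof.
  intros hb ht. split.
  - destruct (liminf_ex v c d hb) as [l hl]. exists l. split; auto.
    intros eps he. destruct (hl (eps/2)) as [[N1 h1] h2]; [lra|].
    destruct (ht (eps/2)) as [N2 h3]; [lra|]. split.
    + exists (N1+N2)%nat. intros n hn. specialize (h1 n ltac:(lia)). specialize (h3 n ltac:(lia)).
      apply Rabs_def2 in h3. lra.
    + intros N. destruct (h2 (N+N2)%nat) as [n [hn hn2]]. exists n. split; [lia|].
      specialize (h3 n ltac:(lia)). apply Rabs_def2 in h3. lra.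
  - destruct (limsup_ex v c d hb) as [l hl]. exists l. split; auto.
    intros eps he. destruct (hl (eps/2)) as [[N1 h1] h2]; [lra|].
    destruct (ht (eps/2)) as [N2 h3]; [lra|]. split.
    + exists (N1+N2)%nat. intros n hn. specialize (h1 n ltac:(lia)). specialize (h3 n ltac:(lia)).
      apply Rabs_def2 in h3. lra.
    + intros N. destruct (h2 (N+N2)%nat) as [n [hn hn2]]. exists n. split; [lia|].
      specialize (h3 n ltac:(lia)). apply Rabs_def2 in h3. lra.
Qed.

End LimAux.
Import LimAux.


Definition upd (w : nat -> bool) (n : nat) (b : bool) : nat -> bool :=
  fun k => if Nat.eqb k n then b else w k.
Definition dflt : nat -> bool := fun _ => false.

Fixpoint Ex (q : nat -> R) (n : nat) (F : (nat -> bool) -> R) : R :=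
  match n with
  | O => F dflt
  | S m => Ex q m (fun w => q (S m) * F (upd w (S m) false) + (1 - q (S m)) * F (upd w (S m) true))
  end.

Definition qok (q : nat -> R) := forall n, (1 <= n)%nat -> 0 <= q n <= 1.

Lemma Ex_ext q n F G : (forall w, F w = G w) -> Ex q n F = Ex q n G.
Proof.
  revert F G; induction n; intros F G h; simpl; auto.
  apply IHn. intros w. rewrite !h. auto.
Qed.

Lemma Ex_plus q n F G : Ex q n (fun w => F w + G w) = Ex q n F + Ex q n G.
Proof.
  revert F G; induction n; intros F G; simpl; auto.
  rewrite <- IHn. apply Ex_ext. intros; ring.
Qed.

Lemma Ex_scal q n c F : Ex q n (fun w => c * F w) = c * Ex q n F.
Proof.
  revert F; induction n; intros F; simpl; auto.
  rewrite <- IHn. apply Ex_ext. intros; ring.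
Qed.

Lemma Ex_const q n c : Ex q n (fun _ => c) = c.
Proof.
  induction n; simpl; auto.
  rewrite <- IHn at 1. apply Ex_ext. intros; ring.
Qed.

Lemma Ex_mono q n F G : qok q -> (forall w, F w <= G w) -> Ex q n F <= Ex q n G.
Proof.
  intros hq; revert F G; induction n; intros F G h; simpl; auto.
  apply IHn. intros w. destruct (hq (S n)) as [h1 h2]; [lia|].
  pose proof (h (upd w (S n) false)); pose proof (h (upd w (S n) true)).
  apply Rplus_le_compat; apply Rmult_le_compat_l; lra.
Qed.

Definition agree (n : nat) (w w' : nat -> bool) := forall k, (1 <= k <= n)%nat -> w k = w' k.
Definition dep {T} n (F : (nat -> bool) -> T) := forall w w', agree n w w' -> F w = F w'.

Lemma cylmass_dep q n : dep n (fun w => cylmass q w n).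
Proof.
  induction n; intros w w' h; simpl; auto.
  rewrite (IHn w w'). rewrite (h (S n)). auto. lia.
  intros k hk; apply h; lia.
Qed.

Lemma cylmass_nonneg q w n : qok q -> 0 <= cylmass q w n.
Proof.
  intros hq; induction n; simpl; [lra|]. destruct (hq (S n)); [lia|].
  apply Rmult_le_pos; auto. destruct (w (S n)); lra.
Qed.

Lemma upd_agree n w b : agree n w (upd w (S n) b).
Proof. intros k hk. unfold upd. destruct (Nat.eqb_spec k (S n)); auto; lia. Qed.

Lemma upd_same w n : forall k, upd w n (w n) k = w k.
Proof. intros k; unfold upd. destruct (Nat.eqb_spec k n); subst; auto. Qed.

Fixpoint lmass (q : nat -> R) (n : nat) (L : list (nat -> bool)) : R :=
  match L with nil => 0 | w :: L' => cylmass q w n + lmass q n L' end.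

Lemma lmass_app q n L1 L2 : lmass q n (L1 ++ L2) = lmass q n L1 + lmass q n L2.
Proof. induction L1; simpl; auto. lra. rewrite IHL1; ring. Qed.

Lemma lmass_map q n L b : lmass q (S n) (map (fun w => upd w (S n) b) L) =
  (if b then 1 - q (S n) else q (S n)) * lmass q n L.
Proof.
  induction L; simpl. ring. rewrite IHL.
  rewrite (cylmass_dep q n (upd a (S n) b) a).
  replace (upd a (S n) b (S n)) with b by (unfold upd; rewrite Nat.eqb_refl; auto). ring.
  intros k hk. symmetry. apply upd_agree. auto.
Qed.

Definition ind (P : bool) : R := if P then 1 else 0.

Lemma cover_lemma q n (P : (nat -> bool) -> bool) : dep n P ->
  { L | (length L <= 2 ^ n)%nat /\
    (forall om, P om = true -> exists w, In w L /\ in_cyl w n om) /\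
    lmass q n L = Ex q n (fun w => ind (P w)) }.
Proof.
  revert P; induction n; intros P hP.
  - case_eq (P dflt); intros hd.
    + exists (dflt :: nil). simpl. split; [lia|]. split.
      * intros om _. exists dflt. split; auto. intros k hk; lia.
      * unfold ind; rewrite hd; ring.
    + exists nil. simpl. split; [lia|]. split.
      * intros om h. rewrite (hP om dflt) in h. congruence. intros k hk; lia.
      * unfold ind; rewrite hd; ring.
  - destruct (IHn (fun w => P (upd w (S n) false))) as [L0 [hl0 [hc0 hm0]]].
    { intros w w' h. apply hP. intros k hk. unfold upd. destruct (Nat.eqb_spec k (S n)); auto. apply h; lia. }
    destruct (IHn (fun w => P (upd w (S n) true))) as [L1 [hl1 [hc1 hm1]]].
    { intros w w' h. apply hP. intros k hk. unfold upd. destruct (Nat.eqb_spec k (S n)); auto. apply h; lia. }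
    exists (map (fun w => upd w (S n) false) L0 ++ map (fun w => upd w (S n) true) L1).
    split; [|split].
    + rewrite length_app, !length_map. simpl. lia.
    + intros om hom. case_eq (om (S n)); intros hb.
      * destruct (hc1 om) as [w [hw hcw]].
        { rewrite (hP (upd om (S n) true) om); auto. intros k hk. unfold upd. destruct (Nat.eqb_spec k (S n)); subst; auto. }
        exists (upd w (S n) true). split.
        { apply in_or_app; right. apply (in_map (fun w => upd w (S n) true)); auto. }
        intros k hk. unfold upd. destruct (Nat.eqb_spec k (S n)). subst; auto. apply hcw; lia.
      * destruct (hc0 om) as [w [hw hcw]].
        { rewrite (hP (upd om (S n) false) om); auto. intros k hk. unfold upd. destruct (Nat.eqb_spec k (S n)); subst; auto. }
        exists (upd w (S n) false). split.
        { apply in_or_app; left. apply (in_map (fun w => upd w (S n) false)); auto. }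
        intros k hk. unfold upd. destruct (Nat.eqb_spec k (S n)). subst; auto. apply hcw; lia.
    + rewrite lmass_app, !lmass_map, hm0, hm1. simpl.
      rewrite <- !Ex_scal, <- Ex_plus. apply Ex_ext. intros; ring.
Qed.


Fixpoint fsum (f : nat -> R) (n : nat) : R :=
  match n with O => 0 | S m => fsum f m + f m end.

Lemma fsum_ext f g n : (forall i, (i < n)%nat -> f i = g i) -> fsum f n = fsum g n.
Proof. induction n; intros h; simpl; auto. rewrite IHn; [rewrite h; auto; lia| intros; apply h; lia]. Qed.

Lemma fsum_le f g n : (forall i, (i < n)%nat -> f i <= g i) -> fsum f n <= fsum g n.
Proof. induction n; intros h; simpl; [lra|]. apply Rplus_le_compat; auto. Qed.

Lemma fsum_nonneg f n : (forall i, 0 <= f i) -> 0 <= fsum f n.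
Proof. intros h; induction n; simpl; [lra|]. specialize (h n); lra. Qed.

Lemma fsum_mono_n f n m : (forall i, 0 <= f i) -> (n <= m)%nat -> fsum f n <= fsum f m.
Proof. intros h hm; induction hm; simpl; [lra|]. specialize (h m); lra. Qed.

Lemma fsum_add f a b : fsum f (a + b) = fsum f a + fsum (fun i => f (a + i)%nat) b.
Proof. induction b; simpl. rewrite Nat.add_0_r; ring. rewrite Nat.add_succ_r; simpl. rewrite IHb; ring. Qed.

Lemma fsum_front f m : fsum f (S m) = f O + fsum (fun i => f (S i)) m.
Proof. induction m; simpl. ring. simpl in IHm. rewrite IHm. ring. Qed.

Lemma fsum_scal c f n : fsum (fun i => c * f i) n = c * fsum f n.
Proof. induction n; simpl. ring. rewrite IHn; ring. Qed.

Lemma fsum_plus f g n : fsum (fun i => f i + g i) n = fsum f n + fsum g n.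
Proof. induction n; simpl. ring. rewrite IHn; ring. Qed.

Lemma fsum_const c n : fsum (fun _ => c) n = INR n * c.
Proof. induction n; simpl fsum. simpl; ring. rewrite IHn, S_INR; ring. Qed.

Lemma sum_f_R0_fsum g J : sum_f_R0 g J = fsum g (S J).
Proof. induction J; simpl. ring. simpl in IHJ. rewrite IHJ. ring. Qed.

Lemma geom_fsum m : fsum (fun n => (1/2)^n) m = 2 - 2 * (1/2)^m.
Proof. induction m; simpl. ring. rewrite IHm. field. Qed.

Lemma fsum_list q n L d m : (length L <= m)%nat ->
  fsum (fun i => if Nat.ltb i (length L) then cylmass q (nth i L d) n else 0) m = lmass q n L.
Proof.
  revert m; induction L as [|w L IH]; intros m hm; simpl.
  - transitivity (fsum (fun _ => 0) m). apply fsum_ext; intros; destruct i; auto.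
    rewrite fsum_const; ring.
  - destruct m as [|m]; simpl in hm; [lia|]. rewrite fsum_front. simpl.
    rewrite <- (IH m); [|lia]. f_equal.
Qed.

Definition dw (q : nat -> R) : nat -> bool := fun k => if Rle_dec (q k) (1/2) then false else true.

Lemma dw_small q l : qok q -> cylmass q (dw q) l <= (1/2)^l.
Proof.
  intros hq; induction l; simpl; [lra|].
  destruct (hq (S l)); [lia|].
  pose proof (cylmass_nonneg q (dw q) l hq).
  unfold dw at 2. destruct (Rle_dec (q (S l)) (1/2)).
  - replace ((1/2) * (1/2)^l) with ((1/2)^l * (1/2)) by ring.
    apply Rmult_le_compat; lra.
  - replace ((1/2) * (1/2)^l) with ((1/2)^l * (1/2)) by ring.
    apply Rmult_le_compat; lra.
Qed.

Lemma null_lists q (N : (nat -> bool) -> Prop) : qok q ->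
  (forall eps, 0 < eps -> exists L : nat -> list (nat -> bool),
     (forall n, (length (L n) <= 2 ^ n)%nat) /\
     (forall om, N om -> exists n w, In w (L n) /\ in_cyl w n om) /\
     (forall M, fsum (fun n => lmass q n (L n)) M <= eps)) -> null_set q N.
Proof.
  intros hq hL eps he.
  destruct (hL (eps/2)) as [L [hlen [hcov hsum]]]; [lra|].
  destruct (pow_lt_1_zero (1/2) ltac:(rewrite Rabs_pos_eq; lra) (eps/8)) as [K hK]; [lra|].
  specialize (hK K (le_n _)). rewrite Rabs_pos_eq in hK by (apply pow_le; lra).
  set (ws := fun j => if Nat.eqb j 0 then dw q else nth (j - 2 ^ Nat.log2 j) (L (Nat.log2 j)) (dw q)).
  set (ns := fun j => if Nat.eqb j 0 then K else
              if Nat.ltb (j - 2 ^ Nat.log2 j) (length (L (Nat.log2 j))) then Nat.log2 j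
              else (2 * Nat.log2 j + K)%nat).
  exists ws, ns. split.
  - intros om hom. destruct (hcov om hom) as [n [w [hw hc]]].
    destruct (In_nth (L n) w (dw q) hw) as [i [hi hni]].
    assert (hlog : Nat.log2 (2 ^ n + i) = n).
    { apply Nat.log2_unique; [lia|]. specialize (hlen n). simpl. lia. }
    exists (2 ^ n + i)%nat. unfold ws, ns.
    assert (h0 : Nat.eqb (2 ^ n + i) 0 = false).
    { apply Nat.eqb_neq. pose proof (Nat.pow_nonzero 2 n). lia. }
    rewrite h0, hlog. replace (2 ^ n + i - 2 ^ n)%nat with i by lia.
    rewrite hni. replace (Nat.ltb i (length (L n))) with true. auto.
    symmetry; apply Nat.ltb_lt; auto.
  - intros J. rewrite sum_f_R0_fsum.
    set (g := fun j => cylmass q (ws j) (ns j)).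
    assert (gnn : forall j, 0 <= g j) by (intros; apply cylmass_nonneg; auto).
    set (blk := fun n => fsum (fun i => g (2 ^ n + i)%nat) (2 ^ n)).
    assert (hsplit : forall M, fsum g (2 ^ M) = g O + fsum blk M).
    { induction M. simpl. lra.
      simpl (2 ^ S M)%nat. rewrite Nat.add_0_r, fsum_add, IHM. simpl. change (blk M) with (fsum (fun i => g (2^M+i)%nat) (2^M)). lra. }
    assert (hblk : forall n, blk n <= lmass q n (L n) + (1/2)^(n+K)).
    { intros n. unfold blk.
      eapply Rle_trans.
      { apply (fsum_le _ (fun i => (if Nat.ltb i (length (L n)) then cylmass q (nth i (L n) (dw q)) n else 0) + (1/2)^(2*n+K))).
        intros i hi. unfold g, ws, ns.
        assert (hlog : Nat.log2 (2 ^ n + i) = n) by (apply Nat.log2_unique; [lia|]; simpl; lia).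
        assert (h0 : Nat.eqb (2 ^ n + i) 0 = false).
        { apply Nat.eqb_neq. pose proof (Nat.pow_nonzero 2 n). lia. }
        rewrite h0, hlog. replace (2 ^ n + i - 2 ^ n)%nat with i by lia.
        destruct (Nat.ltb_spec i (length (L n))).
        - assert (0 <= (1/2)^(2*n+K)) by (apply pow_le; lra). lra.
        - pose proof (dw_small q (2 * n + K) hq). rewrite nth_overflow. lra. lia. }
      rewrite fsum_plus, fsum_list by auto. rewrite fsum_const.
      apply Rplus_le_compat_l. rewrite pow_INR. simpl (INR 2).
      rewrite !pow_add. replace (2*n)%nat with (n+n)%nat by lia. rewrite pow_add.
      assert (h2: (1+1)^n * (1/2)^n = 1) by (rewrite <- Rpow_mult_distr; replace ((1+1)*(1/2)) with 1 by field; apply pow1).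
      replace ((1 + 1) ^ n * ((1 / 2) ^ n * (1 / 2) ^ n * (1 / 2) ^ K)) with (((1+1)^n * (1/2)^n) * ((1 / 2) ^ n * (1 / 2) ^ K)) by ring.
      rewrite h2. lra. }
    assert (hJ : (S J <= 2 ^ S J)%nat) by (apply Nat.lt_le_incl, Nat.pow_gt_lin_r; lia).
    eapply Rle_lt_trans. apply (fsum_mono_n g _ _ gnn hJ).
    rewrite hsplit.
    assert (hg0 : g O <= (1/2)^K) by (unfold g, ws, ns; simpl; apply dw_small; auto).
    eapply Rle_lt_trans.
    { apply Rplus_le_compat. apply hg0. apply (fsum_le _ _ _ (fun n _ => hblk n)). }
    rewrite fsum_plus.
    rewrite (fsum_ext (fun n => (1/2)^(n+K)) (fun n => (1/2)^K * (1/2)^n)) by (intros; rewrite pow_add; ring).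
    rewrite fsum_scal, geom_fsum. specialize (hsum (S J)).
    assert (0 <= (1/2)^(S J)) by (apply pow_le; lra).
    assert (0 <= (1/2)^K) by (apply pow_le; lra).
    nra.
Qed.


Definition Dn (Y : nat -> bool -> R) (n : nat) (w : nat -> bool) : R :=
  psum (fun k => Y k (w k)) n.

Lemma Dn_dep Y n : dep n (Dn Y n).
Proof.
  induction n; intros w w' h; unfold Dn; simpl; auto.
  fold (Dn Y n w) (Dn Y n w'). rewrite (IHn w w'), (h (S n)); auto. lia.
  intros k hk; apply h; lia.
Qed.

Lemma Dn_upd Y n w b : Dn Y (S n) (upd w (S n) b) = Dn Y n w + Y (S n) b.
Proof.
  unfold Dn at 1; simpl. fold (Dn Y n (upd w (S n) b)).
  rewrite (Dn_dep Y n (upd w (S n) b) w). unfold upd; rewrite Nat.eqb_refl; auto.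
  intros k hk; symmetry; apply upd_agree; auto.
Qed.

Definition centered q (Y : nat -> bool -> R) :=
  forall k, (1 <= k)%nat -> q k * Y k false + (1 - q k) * Y k true = 0.
Definition m4bound q (Y : nat -> bool -> R) M :=
  forall k, (1 <= k)%nat -> q k * Y k false ^ 4 + (1 - q k) * Y k true ^ 4 <= M.

Lemma step_Ex q Y n (G : R -> R) :
  Ex q (S n) (fun w => G (Dn Y (S n) w)) =
  Ex q n (fun w => q (S n) * G (Dn Y n w + Y (S n) false) + (1 - q (S n)) * G (Dn Y n w + Y (S n) true)).
Proof. simpl. apply Ex_ext; intros w. rewrite !Dn_upd. auto. Qed.

Lemma E1 q Y n : centered q Y -> Ex q n (Dn Y n) = 0.
Proof.
  intros hc; induction n. simpl. unfold Dn; simpl; auto.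
  change (Ex q (S n) (fun w => (fun x => x) (Dn Y (S n) w)) = 0).
  rewrite step_Ex.
  rewrite (Ex_ext _ _ _ (fun w => Dn Y n w + (q (S n) * Y (S n) false + (1 - q (S n)) * Y (S n) true))) by (intros; ring).
  rewrite Ex_plus, Ex_const, IHn, hc by lia. ring.
Qed.

Lemma E2 q Y n M : qok q -> centered q Y -> m4bound q Y M ->
  Ex q n (fun w => Dn Y n w ^ 2) <= INR n * (1 + M).
Proof.
  intros hq hc hm; induction n. simpl. unfold Dn; simpl; lra.
  rewrite (step_Ex q Y n (fun x => x ^ 2)).
  set (e2 := q (S n) * Y (S n) false ^ 2 + (1 - q (S n)) * Y (S n) true ^ 2).
  rewrite (Ex_ext _ _ _ (fun w => (Dn Y n w ^ 2 + (2 * (q (S n) * Y (S n) false + (1 - q (S n)) * Y (S n) true)) * Dn Y n w) + e2)) by (intros; unfold e2; ring).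
  rewrite Ex_plus, Ex_plus, Ex_scal, Ex_const, E1, hc by (auto; lia).
  assert (e2 <= 1 + M).
  { unfold e2. specialize (hm (S n) ltac:(lia)). destruct (hq (S n)); [lia|].
    assert (forall y, y^2 <= 1 + y^4) by (intros; nra).
    pose proof (H1 (Y (S n) false)); pose proof (H1 (Y (S n) true)). nra. }
  rewrite S_INR. lra.
Qed.

Lemma E4 q Y n M : qok q -> centered q Y -> m4bound q Y M -> 0 <= M ->
  Ex q n (fun w => Dn Y n w ^ 4) <= (3 * (1 + M) ^ 2 + M) * (INR n) ^ 2.
Proof.
  intros hq hc hm hM0; induction n. simpl. unfold Dn; simpl; lra.
  rewrite (step_Ex q Y n (fun x => x ^ 4)).
  set (y0 := Y (S n) false). set (y1 := Y (S n) true). set (qq := q (S n)).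
  set (e2 := qq * y0 ^ 2 + (1 - qq) * y1 ^ 2).
  set (e3 := qq * y0 ^ 3 + (1 - qq) * y1 ^ 3).
  set (e4 := qq * y0 ^ 4 + (1 - qq) * y1 ^ 4).
  set (e1 := qq * y0 + (1 - qq) * y1).
  rewrite (Ex_ext _ _ _ (fun w => ((Dn Y n w ^ 4 + (4 * e1) * Dn Y n w ^ 3) + (6 * e2) * Dn Y n w ^ 2) + ((4 * e3) * Dn Y n w + e4))) by (intros; unfold e1, e2, e3, e4; ring).
  rewrite !Ex_plus, !Ex_scal, Ex_const, E1 by auto.
  assert (he1 : e1 = 0) by (apply hc; lia).
  assert (he2 : 0 <= e2 <= 1 + M).
  { unfold e2. specialize (hm (S n) ltac:(lia)). destruct (hq (S n)); [lia|].
    assert (forall y, y^2 <= 1 + y^4) by (intros; nra).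
    pose proof (H1 y0); pose proof (H1 y1). fold qq y0 y1 in hm, H, H0. split; nra. }
  assert (he4 : e4 <= M) by (apply hm; lia).
  pose proof (E2 q Y n M hq hc hm).
  rewrite he1. rewrite S_INR.
  assert (0 <= INR n) by apply pos_INR.
  assert (e2 * Ex q n (fun w => Dn Y n w ^ 2) <= (1 + M) * (INR n * (1 + M))).
  { apply Rmult_le_compat; try lra. apply (Rle_trans _ (Ex q n (fun _ => 0))).
    rewrite Ex_const; lra. apply Ex_mono; auto; intros; nra. }
  nra.
Qed.


Lemma tele_ineq x : 2 <= x -> 1 / (x * sqrt x) <= 2 * (1 / sqrt (x - 1) - 1 / sqrt x).
Proof.
  intros hx.
  assert (ha : 0 < sqrt (x - 1)) by (apply sqrt_lt_R0; lra).
  assert (hb : 0 < sqrt x) by (apply sqrt_lt_R0; lra).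
  assert (ha2 : sqrt (x - 1) * sqrt (x - 1) = x - 1) by (apply sqrt_sqrt; lra).
  assert (hb2 : sqrt x * sqrt x = x) by (apply sqrt_sqrt; lra).
  set (a := sqrt (x - 1)) in *. set (b := sqrt x) in *.
  assert (hba : (b - a) * (b + a) = 1) by (replace ((b-a)*(b+a)) with (b*b - a*a) by ring; lra).
  assert (hab : a < b) by (apply Rnot_le_lt; intro h; assert (0 <= (a-b)*(b+a)) by (apply Rmult_le_pos; lra); lra).
  assert (hd : b - a = 1 / (a + b)) by (apply (Rmult_eq_reg_r (a + b)); [replace ((b-a)*(a+b)) with 1 by (rewrite <- hba; ring); field|]; lra).
  replace (1 / a - 1 / b) with ((b - a) / (a * b)) by (field; lra).
  rewrite hd. rewrite <- hb2.
  replace (2 * (1 / (a + b) / (a * b))) with (2 / (a * b * (a + b))) by (field; lra).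
  replace (1 / (b * b * b)) with (1 / (b * b * b)) by auto.
  apply Rmult_le_reg_r with (b * b * b * (a * b * (a + b))).
  { apply Rmult_lt_0_compat; [nra|]. apply Rmult_lt_0_compat; nra. }
  field_simplify; try lra. nra.
Qed.

Definition sq (n : nat) := 1 / sqrt (INR n - 1).

Lemma telescope N0 c m : (2 <= N0)%nat -> 0 <= c ->
  fsum (fun n => if Nat.ltb n N0 then 0 else c * (sq n - sq (S n))) m <= c * sq N0.
Proof.
  intros hN hc.
  assert (pos : forall n, (2 <= n)%nat -> 0 <= sq n).
  { intros n hn. unfold sq. apply Rlt_le, Rdiv_lt_0_compat; [lra|]. apply sqrt_lt_R0.
    apply le_INR in hn. simpl in hn. lra. }
  assert (forall m, fsum (fun n => if Nat.ltb n N0 then 0 else c * (sq n - sq (S n))) m =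
     if Nat.leb m N0 then 0 else c * (sq N0 - sq m)).
  { induction m0; cbn [fsum]. reflexivity.
    rewrite IHm0. destruct (Nat.ltb_spec m0 N0); destruct (Nat.leb_spec m0 N0);
    destruct (Nat.leb_spec (S m0) N0); try lia; try ring.
    all: try (replace m0 with N0 by lia; ring). }
  rewrite H. destruct (Nat.leb_spec m N0).
  - pose proof (pos N0 hN). apply Rmult_le_pos; lra.
  - pose proof (pos m ltac:(lia)). pose proof (Rmult_le_pos _ _ hc H1). lra.
Qed.

Lemma thr d x D : 0 < d -> 1 / d ^ 8 < x -> 0 < x -> d * x < Rabs D -> x ^ 3 * sqrt x < D ^ 4.
Proof.
  intros hd hx hx0 hD.
  assert (hr : 0 < sqrt x) by (apply sqrt_lt_R0; auto).
  assert (hr2 : sqrt x * sqrt x = x) by (apply sqrt_sqrt; lra).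
  set (r := sqrt x) in *.
  assert (hd8 : 0 < d ^ 8) by (apply pow_lt; auto).
  assert (h1 : 1 < d ^ 8 * x).
  { apply (Rmult_lt_compat_l (d^8)) in hx; auto. replace (d^8 * (1/d^8)) with 1 in hx by (field; lra). lra. }
  assert (hd4 : 0 < d ^ 4) by (apply pow_lt; auto).
  assert (h2 : 1 < d ^ 4 * r).
  { replace (d^8 * x) with ((d^4 * r) * (d^4 * r)) in h1 by (rewrite <- hr2; ring).
    assert (0 < d^4 * r) by (apply Rmult_lt_0_compat; auto).
    nra. }
  assert (hD4 : D ^ 4 = Rabs D ^ 4).
  { replace (D^4) with ((D^2)^2) by ring. replace (Rabs D ^ 4) with ((Rabs D ^ 2)^2) by ring.
    rewrite pow2_abs. auto. }
  rewrite hD4.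
  assert (hdx : 0 < d * x) by (apply Rmult_lt_0_compat; auto).
  assert ((d * x) ^ 4 < Rabs D ^ 4).
  { set (u := d * x) in *. set (v := Rabs D) in *.
    assert (u * u < v * v) by nra. assert (0 < u * u) by nra.
    replace (u^4) with ((u*u)*(u*u)) by ring. replace (v^4) with ((v*v)*(v*v)) by ring. nra. }
  assert (x ^ 3 * r < (d * x) ^ 4).
  { replace ((d*x)^4) with ((d^4 * r) * (x ^ 3 * r)) by (rewrite <- hr2; ring).
    assert (0 < x ^ 3 * r) by (apply Rmult_lt_0_compat; auto; apply pow_lt; auto).
    nra. }
  lra.
Qed.

Lemma ae_D q Y M : qok q -> centered q Y -> m4bound q Y M -> 0 <= M ->
  ae q (fun om => forall d, 0 < d -> exists N, forall n, (N <= n)%nat -> Rabs (Dn Y n om) <= d * INR n).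
Proof.
  intros hq hc hm hM. unfold ae. apply null_lists; [auto|]. intros eps he.
  set (C := 3 * (1 + M) ^ 2 + M).
  assert (hC : 3 <= C) by (unfold C; nra).
  destruct (INR_unbounded ((2 * C / eps) ^ 2 + 2)) as [N0 hN0].
  assert (hN0' : (2 <= N0)%nat).
  { destruct (Nat.le_gt_cases 2 N0) as [h|h]; auto. exfalso.
    assert (INR N0 <= INR 1) by (apply le_INR; lia). simpl in H.
    assert (0 <= (2 * C / eps) ^ 2) by (apply pow2_ge_0). lra. }
  set (P := fun n w => if Rlt_dec (INR n ^ 3 * sqrt (INR n)) (Dn Y n w ^ 4) then true else false).
  assert (depP : forall n, dep n (P n)).
  { intros n w w' h; unfold P; rewrite (Dn_dep Y n w w' h); auto. }
  exists (fun n => if Nat.ltb n N0 then nil else proj1_sig (cover_lemma q n (P n) (depP n))).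
  split; [|split].
  - intros n. destruct (Nat.ltb n N0); simpl; [lia|].
    destruct (proj2_sig (cover_lemma q n (P n) (depP n))) as [h _]; auto.
  - intros om hbad.
    apply not_all_ex_not in hbad. destruct hbad as [d hd].
    apply imply_to_and in hd. destruct hd as [hd hd'].
    destruct (INR_unbounded (1 / d ^ 8)) as [N1 hN1].
    assert (hex : exists n, (N0 + N1 <= n)%nat /\ d * INR n < Rabs (Dn Y n om)).
    { apply NNPP. intro hno. apply hd'. exists (N0 + N1)%nat. intros n hn.
      apply Rnot_lt_le. intro hlt. apply hno. exists n; auto. }
    destruct hex as [n [hn hDn]].
    exists n.
    replace (Nat.ltb n N0) with false by (symmetry; apply Nat.ltb_ge; lia).
    destruct (proj2_sig (cover_lemma q n (P n) (depP n))) as [_ [hcov _]].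
    apply hcov. unfold P. destruct (Rlt_dec _ _) as [|hno]; auto. exfalso; apply hno.
    assert (INR N1 <= INR n) by (apply le_INR; lia).
    assert (INR N0 <= INR n) by (apply le_INR; lia).
    assert (0 <= (2 * C / eps) ^ 2) by (apply pow2_ge_0).
    apply (thr d); auto; lra.
  - intros M'.
    eapply Rle_trans.
    2: { apply Rle_trans with ((2 * C) * sq N0). apply telescope; auto; lra.
      unfold sq. assert (0 <= (2 * C / eps) ^ 2) by (apply pow2_ge_0).
      assert (hs : 2 * C / eps < sqrt (INR N0 - 1)).
      { rewrite <- (sqrt_pow2 (2 * C / eps)) by (apply Rlt_le, Rdiv_lt_0_compat; lra).
        apply sqrt_lt_1; lra. }
      assert (0 < 2 * C / eps) by (apply Rdiv_lt_0_compat; lra).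
      replace (2 * C * (1 / sqrt (INR N0 - 1))) with ((2 * C) / sqrt (INR N0 - 1)) by (field; lra).
      apply (Rmult_le_reg_r (sqrt (INR N0 - 1))); [lra|].
      replace (2 * C / sqrt (INR N0 - 1) * sqrt (INR N0 - 1)) with (2 * C) by (field; lra).
      apply (Rmult_lt_compat_l eps) in hs; auto.
      replace (eps * (2 * C / eps)) with (2 * C) in hs by (field; lra). lra. }
    apply fsum_le. intros n _.
    destruct (Nat.ltb_spec n N0); simpl; [lra|].
    destruct (proj2_sig (cover_lemma q n (P n) (depP n))) as [_ [_ hms]].
    rewrite hms.
    assert (hx : 2 <= INR n) by (assert (h2n : (2 <= n)%nat) by lia; apply le_INR in h2n; simpl in h2n; lra).
    set (x := INR n) in *.
    assert (hr : 0 < sqrt x) by (apply sqrt_lt_R0; lra).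
    assert (hT : 0 < x ^ 3 * sqrt x) by (apply Rmult_lt_0_compat; auto; apply pow_lt; lra).
    eapply Rle_trans.
    { apply (Ex_mono q n _ (fun w => (1 / (x ^ 3 * sqrt x)) * Dn Y n w ^ 4)); auto.
      intros w. unfold ind, P. fold x. destruct (Rlt_dec _ _) as [h|h].
      - apply (Rmult_le_reg_l (x ^ 3 * sqrt x)); auto. unfold ind. replace (x ^ 3 * sqrt x * (1 / (x ^ 3 * sqrt x) * Dn Y n w ^ 4)) with (Dn Y n w ^ 4) by (field; lra). lra.
      - assert (0 <= Dn Y n w ^ 4) by (replace (Dn Y n w ^ 4) with ((Dn Y n w ^ 2) ^ 2) by ring; apply pow2_ge_0).
        assert (0 <= 1 / (x ^ 3 * sqrt x)) by (apply Rlt_le, Rdiv_lt_0_compat; lra).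
        apply Rmult_le_pos; auto. }
    rewrite Ex_scal.
    pose proof (E4 q Y n M hq hc hm hM) as h4. fold C x in h4.
    eapply Rle_trans.
    { apply Rmult_le_compat_l. apply Rlt_le, Rdiv_lt_0_compat; lra. apply h4. }
    replace (1 / (x ^ 3 * sqrt x) * (C * x ^ 2)) with (C * (1 / (x * sqrt x))) by (field; lra).
    replace (2 * C * (sq n - sq (S n))) with (C * (2 * (1 / sqrt (x - 1) - 1 / sqrt x))).
    2: { unfold sq. rewrite S_INR. fold x. replace (x + 1 - 1) with x by ring. ring. }
    apply Rmult_le_compat_l; [lra|]. apply tele_ineq; auto.
Qed.


Lemma lnle x y : 0 < x -> x <= y -> ln x <= ln y.
Proof. intros hx hxy. destruct (Req_dec x y). subst; lra. apply Rlt_le, ln_increasing; lra. Qed.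

Lemma ln2pos : 0 < ln 2.
Proof. rewrite <- ln_1. apply ln_increasing; lra. Qed.

Lemma psum_minus u v n : psum (fun k => u k - v k) n = psum u n - psum v n.
Proof. induction n; simpl. ring. rewrite IHn; ring. Qed.

Lemma psum_bounds g c d n : (forall k, (1 <= k)%nat -> c <= g k <= d) ->
  INR n * c <= psum g n <= INR n * d.
Proof.
  intros h; induction n; simpl psum. simpl; lra.
  destruct (h (S n)); [lia|]. rewrite S_INR. lra.
Qed.

Lemma psum_lb g c n : (forall k, (1 <= k)%nat -> c <= g k) -> INR n * c <= psum g n.
Proof.
  intros h; induction n; simpl psum. simpl; lra.
  specialize (h (S n) ltac:(lia)). rewrite S_INR. lra.
Qed.

Definition fq (q : nat -> R) (k : nat) (b : bool) : R := - ln (if b then 1 - q k else q k).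

Lemma lncyl q om n : (forall n, 0 < cylmass q om n) -> ln (cylmass q om n) = - psum (fun k => fq q k (om k)) n.
Proof.
  intros hpos; induction n; simpl. rewrite ln_1; ring.
  assert (hf : 0 < (if om (S n) then 1 - q (S n) else q (S n))).
  { pose proof (hpos (S n)) as h1. pose proof (hpos n) as h0. simpl in h1.
    destruct (Rlt_le_dec 0 (if om (S n) then 1 - q (S n) else q (S n))); auto.
    assert (cylmass q om n * (if om (S n) then 1 - q (S n) else q (S n)) <= 0).
    { set (ff := if om (S n) then 1 - q (S n) else q (S n)) in *. nra. } lra. }
  rewrite ln_mult, IHn; auto. unfold fq; ring.
Qed.

Lemma ilen_pos A n : (forall n, (1 <= n)%nat -> 2 <= A n) -> 0 < ilen A n.
Proof. intros hA; induction n; simpl. lra. apply Rdiv_lt_0_compat; auto. specialize (hA (S n) ltac:(lia)); lra. Qed.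

Lemma lndiam A om n : (forall n, (1 <= n)%nat -> 2 <= A n) -> ln (diam A om n) = - psum (bseq A) n.
Proof.
  intros hA. unfold diam, iright. replace (ileft A om n + ilen A n - ileft A om n) with (ilen A n) by ring.
  induction n; simpl. rewrite ln_1; ring.
  assert (0 < A (S n)) by (specialize (hA (S n) ltac:(lia)); lra).
  unfold Rdiv. rewrite ln_mult, ln_Rinv, IHn; auto. unfold bseq; ring. apply ilen_pos; auto.
  apply Rinv_0_lt_compat; auto.
Qed.

Lemma final_close A (hA : forall n, (1 <= n)%nat -> 2 <= A n) (g : nat -> R) K Y om (dl : nat -> R) :
  (forall k, (1 <= k)%nat -> 0 <= g k <= K) ->
  (forall d, 0 < d -> exists N, forall n, (N <= n)%nat -> Rabs (Dn Y n om) <= d * INR n) ->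
  (forall n, dl n = (Dn Y n om + psum g n) / psum (bseq A) n) ->
  same_liminf dl (ratio g A) /\ same_limsup dl (ratio g A).
Proof.
  intros hg hD hdl.
  assert (hb : forall n, INR n * ln 2 <= psum (bseq A) n).
  { intros n. apply psum_lb. intros k hk. unfold bseq. apply lnle; [lra|]. apply hA; auto. }
  assert (hl2 := ln2pos).
  assert (hK : 0 <= K) by (destruct (hg 1%nat); [lia|]; lra).
  apply (same_of_close dl (ratio g A) 0 (K / ln 2)).
  - intros n. unfold ratio. destruct n as [|m].
    + simpl. unfold Rdiv. rewrite Rmult_0_l. split; [lra|]. apply Rmult_le_pos; auto. left; apply Rinv_0_lt_compat; auto.
    + set (n := S m). assert (hn : 1 <= INR n) by (unfold n; rewrite S_INR; pose proof (pos_INR m); lra).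
      pose proof (psum_bounds g 0 K n hg). pose proof (hb n).
      assert (hB : 0 < psum (bseq A) n) by nra.
      split. apply Rmult_le_pos; [lra|]. left; apply Rinv_0_lt_compat; auto.
      unfold Rdiv. apply Rle_trans with (INR n * K * / (INR n * ln 2)).
      * apply Rmult_le_compat; [lra | left; apply Rinv_0_lt_compat; lra | lra |].
        apply Rinv_le_contravar; [nra|lra].
      * right; field; lra.
  - intros eps he. destruct (hD (eps * ln 2 / 2)) as [N hN]. { apply Rmult_lt_0_compat; [nra|lra]. }
    exists (N + 1)%nat. intros n hn. rewrite hdl. unfold ratio.
    assert (hn1 : 1 <= INR n) by (assert (h1 : (1 <= n)%nat) by lia; apply le_INR in h1; simpl in h1; lra).
    pose proof (hb n). assert (hB : 0 < psum (bseq A) n) by nra.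
    replace ((Dn Y n om + psum g n) / psum (bseq A) n - psum g n / psum (bseq A) n) with (Dn Y n om / psum (bseq A) n) by (field; lra).
    unfold Rdiv. rewrite Rabs_mult, (Rabs_pos_eq (/ _)) by (left; apply Rinv_0_lt_compat; auto).
    specialize (hN n ltac:(lia)).
    apply (Rmult_lt_reg_r (psum (bseq A) n)); auto.
    rewrite Rmult_assoc, Rinv_l, Rmult_1_r by lra.
    nra.
Qed.


Lemma ylt y : y < exp y.
Proof. destruct (Req_dec y 0). subst. rewrite exp_0. lra. pose proof (exp_ineq1 y H). lra. Qed.

Lemma ln_nonpos t : 0 < t -> t <= 1 -> ln t <= 0.
Proof. intros. rewrite <- ln_1. apply lnle; lra. Qed.

Lemma small1 t : 0 <= t <= 1 -> 0 <= t * (- ln t) <= 1.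
Proof.
  intros [h0 h1]. destruct (Req_dec t 0). subst. lra.
  assert (ht : 0 < t) by lra. pose proof (ln_nonpos t ht h1).
  split. apply Rmult_le_pos; lra.
  pose proof (ylt (- ln t)). rewrite exp_Ropp, exp_ln in H1 by auto.
  apply (Rmult_lt_compat_l t) in H1; auto. rewrite Rinv_r in H1 by lra. lra.
Qed.

Lemma small4 t : 0 <= t <= 1 -> 0 <= t * (ln t) ^ 4 <= 256.
Proof.
  intros [h0 h1]. split. apply Rmult_le_pos; auto. replace (ln t ^ 4) with ((ln t ^ 2) ^ 2) by ring. apply pow2_ge_0.
  destruct (Req_dec t 0). subst. lra.
  assert (ht : 0 < t) by lra. pose proof (ln_nonpos t ht h1).
  set (z := - ln t).
  assert (hz : 0 <= z) by (unfold z; lra).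
  pose proof (ylt (z / 4)).
  assert (he : exp (z / 4) ^ 4 = / t).
  { simpl. rewrite Rmult_1_r, <- !exp_plus. replace (z/4 + (z/4 + (z/4 + z/4))) with z by field.
    unfold z. rewrite exp_Ropp, exp_ln; auto. }
  assert ((z / 4) ^ 4 <= exp (z / 4) ^ 4).
  { apply pow_incr. split; lra. }
  replace (ln t ^ 4) with (256 * (z / 4) ^ 4) by (unfold z; field).
  rewrite he in H2. apply (Rmult_le_compat_l t) in H2; [|lra]. rewrite Rinv_r in H2 by lra. nra.
Qed.

Lemma quart u m : (u - m) ^ 4 <= 8 * u ^ 4 + 8 * m ^ 4.
Proof.
  assert (h1 : (u - m) ^ 2 <= 2 * u ^ 2 + 2 * m ^ 2) by (assert (0 <= (u + m) ^ 2) by apply pow2_ge_0; nra).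
  assert (h0 : 0 <= (u - m) ^ 2) by apply pow2_ge_0.
  assert (h2 : (u - m) ^ 4 <= (2 * u ^ 2 + 2 * m ^ 2) ^ 2).
  { replace ((u-m)^4) with (((u-m)^2)^2) by ring. apply pow_incr. lra. }
  assert (2 * u^2 * m^2 <= u^4 + m^4) by (assert (0 <= (u^2 - m^2)^2) by apply pow2_ge_0; nra).
  nra.
Qed.

Lemma ae_mono q (P Q : (nat -> bool) -> Prop) : (forall om, P om -> Q om) -> ae q P -> ae q Q.
Proof.
  intros h hP eps he. destruct (hP eps he) as [ws [ns [hc hs]]]. exists ws, ns. split; auto.
Qed.

Lemma cyl_pos q om : (forall k, (1 <= k)%nat -> 0 < q k < 1) -> forall n, 0 < cylmass q om n.
Proof.
  intros h n; induction n; simpl. lra. destruct (h (S n)); [lia|].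
  apply Rmult_lt_0_compat; auto. destruct (om (S n)); lra.
Qed.

Lemma xlnx_eq t : xlnx t = t * ln t.
Proof. unfold xlnx. destruct (Req_EM_T t 0). subst; ring. auto. Qed.

Lemma dloc_eq q A om Y (g : nat -> R) (hA : forall n, (1 <= n)%nat -> 2 <= A n) :
  (forall n, 0 < cylmass q om n) ->
  (forall k b, Y k b = fq q k b - g k) ->
  forall n, dloc q A om n = (Dn Y n om + psum g n) / psum (bseq A) n.
Proof.
  intros hpos hY n. unfold dloc. rewrite lncyl, lndiam by auto.
  assert (Dn Y n om = psum (fun k => fq q k (om k)) n - psum g n).
  { unfold Dn. rewrite <- psum_minus. 
    assert (forall n, psum (fun k => Y k (om k)) n = psum (fun k => fq q k (om k) - g k) n).
    { induction n0; simpl; auto. rewrite IHn0, hY. auto. }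
    auto. }
  rewrite H. unfold Rdiv. rewrite Rinv_opp. ring.
Qed.

Theorem lemma3p2 (A p p' : nat -> R) (a b : R)
  (hA : forall n, (1 <= n)%nat -> 2 <= A n)
  (ha : 0 < a) (hab : a <= b) (hb : b < 1)
  (hp : forall n, (1 <= n)%nat -> a <= p n <= b)
  (hp' : forall n, (1 <= n)%nat -> 0 <= p' n <= 1) :
  ae p' (fun om =>
     same_liminf (dloc p A om) (ratio (xseq p p') A) /\
     same_limsup (dloc p A om) (ratio (xseq p p') A)) /\
  ae p' (fun om =>
     (forall n, 0 < cylmass p' om n) ->
     same_liminf (dloc p' A om) (ratio (yseq p') A) /\
     same_limsup (dloc p' A om) (ratio (yseq p') A)).
Proof.
  assert (hq : qok p') by exact hp'.
  split.
  - set (K := - ln a - ln (1 - b)).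
    assert (hf : forall k, (1 <= k)%nat -> 0 <= - ln (p k) <= - ln a /\ 0 <= - ln (1 - p k) <= - ln (1 - b)).
    { intros k hk. destruct (hp k hk).
      pose proof (ln_nonpos (p k) ltac:(lra) ltac:(lra)).
      pose proof (ln_nonpos (1 - p k) ltac:(lra) ltac:(lra)).
      pose proof (lnle a (p k) ha H). pose proof (lnle (1 - b) (1 - p k) ltac:(lra) ltac:(lra)).
      lra. }
    assert (hK : 0 <= K) by (destruct (hf 1%nat) as [h1 h2]; [lia|]; unfold K; lra).
    assert (hx : forall k, (1 <= k)%nat -> 0 <= xseq p p' k <= K).
    { intros k hk. destruct (hf k hk) as [h1 h2]. destruct (hp' k hk). unfold xseq, K.
      split; nra. }
    set (Y := fun k b => fq p k b - xseq p p' k).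
    assert (hY : forall k b, (1 <= k)%nat -> - K <= Y k b <= K).
    { intros k bb hk. destruct (hf k hk) as [h1 h2]. destruct (hx k hk). unfold Y, fq. unfold K in *.
      destruct bb; lra. }
    assert (hc : centered p' Y).
    { intros k hk. unfold Y, fq, xseq. ring. }
    assert (hm : m4bound p' Y (K ^ 4)).
    { intros k hk. destruct (hp' k hk).
      assert (h4 : forall bb, Y k bb ^ 4 <= K ^ 4).
      { intros bb. destruct (hY k bb hk). assert (Y k bb ^ 2 <= K ^ 2) by nra.
        assert (0 <= Y k bb ^ 2) by apply pow2_ge_0.
        replace (Y k bb ^ 4) with ((Y k bb ^ 2)^2) by ring. replace (K ^ 4) with ((K ^ 2)^2) by ring.
        apply pow_incr; lra. }
      pose proof (h4 false); pose proof (h4 true). nra. }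
    assert (hM : 0 <= K ^ 4) by (apply pow_le; auto).
    pose proof (ae_D p' Y (K ^ 4) hq hc hm hM) as hae.
    revert hae. apply ae_mono. intros om hconv.
    apply (final_close A hA (xseq p p') K Y om); auto.
    apply dloc_eq; auto.
    apply cyl_pos. intros k hk. destruct (hp k hk); lra.
  - set (Y := fun k b => fq p' k b - yseq p' k).
    assert (hy : forall k, (1 <= k)%nat -> 0 <= yseq p' k <= 2).
    { intros k hk. destruct (hp' k hk). unfold yseq. rewrite !xlnx_eq.
      pose proof (small1 (p' k) ltac:(lra)). pose proof (small1 (1 - p' k) ltac:(lra)). lra. }
    assert (hc : centered p' Y).
    { intros k hk. unfold Y, fq, yseq. rewrite !xlnx_eq. ring. }
    assert (hm : m4bound p' Y (8 * 512 + 128)).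
    { intros k hk. destruct (hp' k hk). destruct (hy k hk).
      pose proof (small4 (p' k) ltac:(lra)). pose proof (small4 (1 - p' k) ltac:(lra)).
      unfold Y, fq. simpl (if false then _ else _). simpl (if true then _ else _).
      pose proof (quart (- ln (p' k)) (yseq p' k)). pose proof (quart (- ln (1 - p' k)) (yseq p' k)).
      replace ((- ln (p' k)) ^ 4) with (ln (p' k) ^ 4) in * by ring.
      replace ((- ln (1 - p' k)) ^ 4) with (ln (1 - p' k) ^ 4) in * by ring.
      assert (yseq p' k ^ 4 <= 16).
      { assert (yseq p' k ^ 2 <= 4) by nra. assert (0 <= yseq p' k ^ 2) by apply pow2_ge_0.
        replace (yseq p' k ^ 4) with ((yseq p' k ^ 2) ^ 2) by ring. nra. }
      set (u0 := ln (p' k) ^ 4) in *. set (u1 := ln (1 - p' k) ^ 4) in *.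
      set (m4 := yseq p' k ^ 4) in *.
      set (A0 := (- ln (p' k) - yseq p' k) ^ 4) in *. set (A1 := (- ln (1 - p' k) - yseq p' k) ^ 4) in *.
      nra. }
    pose proof (ae_D p' Y _ hq hc hm ltac:(lra)) as hae.
    revert hae. apply ae_mono. intros om hconv hpos.
    apply (final_close A hA (yseq p') 2 Y om); auto.
    apply dloc_eq; auto.
Qed.
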